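(* Let $A$ be a unique factorization domain and $R$ a subring of $A$ such that the group of units of $R$ equals that of $A$ and $R_0\cap A=R$, where $R_0$ is the field of fractions of $R$ inside that of $A$. If $R$ is square-factorially closed in $A$, then $R$ is root closed in $A$, i.e. for every $x\in A$ and $n\ge1$, $x^n\in R$ implies $x\in R$.
   Context: An element $a$ of a commutative ring $A$ is square-free if it cannot be written as $a=b^2c$ with $b,c\in A$ and $b$ not a unit; $\operatorname{Sqf}A$ denotes the set of square-free elements. A subring $R$ of a UFD $A$ is square-factorially closed in $A$ if for every $x\in A$ and $y\in\operatorname{Sqf}A$, $x^2y\in R\setminus\{0\}$ implies $x,y\in R$. *)

(* Defs.v *)
From HB Require Import structures.
From mathcomp Require Import all_boot all_order all_algebra.
Set Implicit Arguments. Unset Strict Implicit. Unset Printing Implicit Defensive.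
Import Order.TTheory GRing.Theory Num.Theory.
Local Open Scope ring_scope.

Definition associated (A : idomainType) (a b : A) : Prop :=
  exists2 u : A, u \is a GRing.unit & a = u * b.

Definition irreducible_elt (A : idomainType) (a : A) : Prop :=
  [/\ a != 0, a \isn't a GRing.unit &
      forall b c : A, a = b * c -> b \is a GRing.unit \/ c \is a GRing.unit].

Definition UFD (A : idomainType) : Prop :=
  (forall a : A, a != 0 -> a \isn't a GRing.unit ->
     exists s : seq A, (forall p, p \in s -> irreducible_elt p) /\ a = \prod_(p <- s) p)
  /\
  (forall s t : seq A,
     (forall p, p \in s -> irreducible_elt p) ->
     (forall p, p \in t -> irreducible_elt p) ->
     \prod_(p <- s) p = \prod_(p <- t) p ->
     exists t' : seq A, [/\ perm_eq t t', size s = size t' &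
       forall i, (i < size s)%N -> associated (nth 0 s i) (nth 0 t' i)]).

Definition square_free (A : idomainType) (a : A) : Prop :=
  ~ exists b c : A, a = b ^+ 2 * c /\ b \isn't a GRing.unit.

Definition sq_fact_closed (A : idomainType) (S : {pred A}) : Prop :=
  forall x y : A, square_free y -> x ^+ 2 * y \in S -> x ^+ 2 * y != 0 ->
    x \in S /\ y \in S.

Definition root_closed (A : idomainType) (S : {pred A}) : Prop :=
  forall (x : A) (n : nat), (1 <= n)%N -> x ^+ n \in S -> x \in S.

(* Main.v *)
Require Import Defs.
From HB Require Import structures.
From mathcomp Require Import all_boot all_order all_algebra.
From mathcomp Require Import ring zify.
From Stdlib Require Import Classical.
Import GRing.Theory.
Local Open Scope ring_scope.

Definition fl {A : idomainType} (a : A) (k : nat) : Prop :=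
  exists u (s : seq A), [/\ u \is a GRing.unit, (forall p, p \in s -> irreducible_elt p),
     size s = k & a = u * \prod_(p <- s) p].

Lemma unit_neq0 (A : idomainType) (u : A) : u \is a GRing.unit -> u != 0.
Proof. by move=> Hu; apply/eqP => u0; move: Hu; rewrite u0 unitr0. Qed.

Lemma irr_unitM (A : idomainType) (w q : A) :
  w \is a GRing.unit -> irreducible_elt q -> irreducible_elt (w * q).
Proof.
move=> Hw [q0 qn Hq]; split.
- by rewrite mulf_neq0 // unit_neq0.
- by rewrite unitrM negb_and qn orbT.
- move=> b c Hbc.
  have : q = (w^-1 * b) * c by rewrite -mulrA -Hbc mulrA mulVr // mul1r.
  move/Hq => [H|H]; last by right.
  by left; move: H; rewrite unitrM unitrV Hw.
Qed.

Lemma fl_exists {A : idomainType} {a : A} : UFD A -> a != 0 -> exists k, fl a k.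
Proof.
move=> [H1 _] a0.
case: (boolP (a \is a GRing.unit)) => Ha.
  by exists 0%N, a, [::]; split => //; rewrite big_nil mulr1.
have [s [Hs ->]] := H1 a a0 Ha.
by exists (size s), 1, s; split => //; rewrite ?unitr1 ?mul1r.
Qed.

Lemma fl_mul {A : idomainType} (a b : A) i j : fl a i -> fl b j -> fl (a * b) (i + j).
Proof.
move=> [u [s [Hu Hs Hsz ->]]] [v [t [Hv Ht Htz ->]]].
exists (u * v), (s ++ t); split.
- by rewrite unitrM Hu Hv.
- by move=> p; rewrite mem_cat => /orP [/Hs|/Ht].
- by rewrite size_cat Hsz Htz.
- rewrite big_cat /=; ring.
Qed.

Lemma fl_nonunit {A : idomainType} (a : A) : fl a 0 -> a \is a GRing.unit.
Proof. by move=> [u [[|p s] [Hu _ // _ ->]]]; rewrite big_nil mulr1. Qed.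

Lemma prod_irr_nonunit {A : idomainType} (p : A) t :
  irreducible_elt p -> \prod_(q <- p :: t) q \isn't a GRing.unit.
Proof. by move=> [_ pn _]; rewrite big_cons unitrM negb_and pn. Qed.

Lemma fl_uniq {A : idomainType} {a : A} {i j} : UFD A -> fl a i -> fl a j -> i = j.
Proof.
move=> [_ H2] [u [s [Hu Hs <- ->]]] [v [t [Hv Ht <- E]]].
case: t Ht E => [|q t] Ht E.
  case: s Hs E => [//|p s] Hs E.
  exfalso; have Hp : irreducible_elt p by apply: Hs; rewrite inE eqxx.
  move: (@prod_irr_nonunit _ p s Hp) => /negP; apply.
  have -> : \prod_(q <- p :: s) q = u^-1 * v by apply: (mulrI Hu); rewrite E big_nil mulr1 mulrA mulrV // mul1r.
  by rewrite unitrM unitrV Hu Hv.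
have Hq : irreducible_elt q by apply: Ht; rewrite inE eqxx.
case: s Hs E => [|p s] Hs E.
  exfalso; move: (@prod_irr_nonunit _ q t Hq) => /negP; apply.
  have -> : \prod_(q <- q :: t) q = v^-1 * u by apply: (mulrI Hv); rewrite -E big_nil mulr1 mulrA mulrV // mul1r.
  by rewrite unitrM unitrV Hu Hv.
set w := u^-1 * v.
have Hw : w \is a GRing.unit by rewrite unitrM unitrV Hu Hv.
have E' : \prod_(x <- p :: s) x = \prod_(x <- (w * q) :: t) x.
  apply: (mulrI Hu); rewrite E !big_cons /w mulrA mulrA mulrA mulrV // mul1r; ring.
have Ht' : forall x, x \in (w * q) :: t -> irreducible_elt x.
  move=> x; rewrite inE => /orP [/eqP ->|hx]; first exact: irr_unitM.
  by apply: Ht; rewrite inE hx orbT.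
have [t' [Hperm Hsz _]] := H2 _ _ Hs Ht' E'.
by rewrite Hsz -(perm_size Hperm).
Qed.

Lemma fl_neq0 {A : idomainType} {x : A} {k} : fl x k -> x != 0.
Proof.
move=> [u [s [Hu Hs _ ->]]]; rewrite mulf_neq0 //; first exact: unit_neq0.
elim: s Hs => [|p s IH] Hs; first by rewrite big_nil oner_eq0.
rewrite big_cons mulf_neq0 //.
  by case: (Hs p (mem_head _ _)).
by apply: IH => q hq; apply: Hs; rewrite inE hq orbT.
Qed.

Lemma fl_sq {A : idomainType} (b c : A) i j : fl b i -> fl c j -> fl (b ^+ 2 * c) (i + i + j).
Proof. by move=> Hb Hc; rewrite expr2; apply: fl_mul => //; apply: fl_mul. Qed.

Lemma sqf_decomp {A : idomainType} : UFD A -> forall k (x : A), fl x k ->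
  exists b c, x = b ^+ 2 * c /\ square_free c.
Proof.
move=> U; elim/ltn_ind => k IH x Hx.
case: (classic (exists b c : A, x = b ^+ 2 * c /\ b \isn't a GRing.unit)).
  move=> [b' [c' [E bn]]].
  have x0 := fl_neq0 Hx.
  have b0 : b' != 0 by apply: contraNneq x0 => b0; rewrite E b0 expr0n mul0r.
  have c0 : c' != 0 by apply: contraNneq x0 => c0; rewrite E c0 mulr0.
  have [i Hi] := fl_exists U b0.
  have [j Hj] := fl_exists U c0.
  have Hk := fl_uniq U Hx (ltac:(rewrite E; exact: fl_sq Hi Hj)).
  have i0 : i <> 0%N by move=> i0; move: Hi; rewrite i0 => /fl_nonunit; apply/negP.
  have [|b'' [c'' [E2 Hsq]]] := IH j _ c' Hj.
    by rewrite Hk; lia.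
  by exists (b' * b''), c''; split => //; rewrite E E2; ring.
by move=> H; exists 1, x; split => //; ring.
Qed.

Theorem theorem3p5 (A : idomainType) (S : {pred A}) :
  UFD A ->
  GRing.subring_closed S ->
  (* the group of units of R equals the group of units of A *)
  (forall x : A, (x \in S /\ exists2 y : A, y \in S & x * y = 1) <-> x \is a GRing.unit) ->
  (* R_0 ∩ A = R, where R_0 = {r/s : r, s ∈ R, s ≠ 0} inside Frac(A) *)
  (forall a : A, (a \in S <->
     exists r s : A, [/\ r \in S, s \in S, s != 0 & a * s = r])) ->
  sq_fact_closed S ->
  root_closed S.
Proof.
move=> U [S1 SB SM] Hunit Hfrac Hsq.
have S0 : 0 \in S by rewrite -(subrr 1); apply: SB.
have SX : forall y n, y \in S -> y ^+ n \in S.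
  by move=> y; elim=> [|n IH] Hy; [rewrite expr0 | rewrite exprS; apply: SM => //; apply: IH].
have Sfr : forall a r s, r \in S -> s \in S -> s != 0 -> a * s = r -> a \in S.
  by move=> a r s Hr Hs s0 E; apply/(Hfrac a); exists r, s.
have Ssq : forall y, y ^+ 2 \in S -> y \in S.
  move=> y Hy; case: (eqVneq y 0) => [->//|y0].
  apply: (Hsq y 1 _ _ _).1; last 2 first.
  - by rewrite mulr1.
  - by rewrite mulr1 expf_neq0.
  move=> [b [c [E bn]]]; move: bn.
  have : (b ^+ 2 * c) \is a GRing.unit by rewrite -E unitr1.
  by rewrite unitrM unitrX_pos // => /andP [-> _].
have main : forall k x, fl x k -> forall n, (0 < n)%N -> x ^+ n \in S -> x \in S.
  elim/ltn_ind => k IHk x Hx; elim/ltn_ind => n IHn n0 Hn.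
  move: (odd_double_half n); move: (n./2) => m nE.
  case: (boolP (odd n)) => no; last first.
    rewrite (negbTE no) add0n in nE.
    have m0 : (0 < m)%N by move: n0; rewrite -nE -addnn; lia.
    apply: (IHn m) => //; first by rewrite -nE -addnn; lia.
    by apply: Ssq; rewrite -exprM mulnC mul2n nE.
  have x0 := fl_neq0 Hx.
  have [b [c [E Hc]]] := sqf_decomp U k x Hx.
  have Hx' : (x ^+ m * b) ^+ 2 * c = x ^+ n.
    have nE' : n = (m * 2).+1 by rewrite -nE no muln2 add1n.
    rewrite nE' [RHS]exprS [in RHS]exprM; set y := x ^+ m; rewrite E; ring.
  have c0 : c != 0 by apply: contraNneq x0 => c0; rewrite E c0 mulr0.
  have b0 : b != 0 by apply: contraNneq x0 => b0; rewrite E b0 expr0n mul0r.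
  have [] := Hsq (x ^+ m * b) c Hc; [by rewrite Hx' | by rewrite Hx' expf_neq0 | move=> _ cS].
  have b2n : (b ^+ n) ^+ 2 \in S.
    apply: (Sfr _ (x ^+ n) (c ^+ n)) => //; first exact: SX.
      exact: expf_neq0.
    by rewrite E exprMn -!exprM mulnC.
  have bnS := Ssq _ b2n.
  have bS : b \in S.
    case: (boolP (b \is a GRing.unit)) => bu; first by case: (Hunit b) => _ /(_ bu) [].
    have [i Hi] := fl_exists U b0.
    have [j Hj] := fl_exists U c0.
    have Hk := fl_uniq U Hx (ltac:(rewrite E; exact: fl_sq Hi Hj)).
    have i0 : i <> 0%N by move=> i0; move: Hi; rewrite i0 => /fl_nonunit; apply/negP.
    by apply: (IHk i _ b Hi n n0 bnS); rewrite Hk; lia.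
  by rewrite E; apply: SM => //; apply: SX.
move=> x n n0 Hn.
case: (eqVneq x 0) => [->//|x0].
have [k Hk] := fl_exists U x0.
exact: main Hk n n0 Hn.
Qed.
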